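(* Let $P,Q\in\Gamma_n$ and $0<r\le R$ with $r\le p_i/q_i\le R$ for all $i$. Let $s,t\in\mathbb{R}$. If $s\ge t$ and $t\le2$, then $$\frac{1}{4r^{t-2}}\Big(\frac{r+1}{2}\Big)^{s-2}\Phi_t(P\|Q)\le\Omega_s(Q\|P)\le\frac{1}{4R^{t-2}}\Big(\frac{R+1}{2}\Big)^{s-2}\Phi_t(P\|Q).$$ If $s\le t$ and $t\ge2$, then $$\frac{1}{4R^{t-2}}\Big(\frac{R+1}{2}\Big)^{s-2}\Phi_t(P\|Q)\le\Omega_s(Q\|P)\le\frac{1}{4r^{t-2}}\Big(\frac{r+1}{2}\Big)^{s-2}\Phi_t(P\|Q).$$
   Context: $\Gamma_n=\{P=(p_1,\dots,p_n): p_i>0,\ \sum_i p_i=1\}$, $n\ge2$. For $P,Q\in\Gamma_n$ and $s\in\mathbb{R}$: $\Phi_s(P\|Q)=[s(s-1)]^{-1}\big[\sum_i p_i^s q_i^{1-s}-1\big]$ for $s\ne0,1$; $\Phi_0(P\|Q)=\sum_i q_i\ln(q_i/p_i)$; $\Phi_1(P\|Q)=\sum_i p_i\ln(p_i/q_i)$. $\Omega_s(Q\|P)=[s(s-1)]^{-1}\big[\sum_i q_i\big(\frac{p_i+q_i}{2q_i}\big)^s-1\big]$ for $s\ne0,1$; $\Omega_0(Q\|P)=\sum_i q_i\ln\frac{2q_i}{p_i+q_i}$; $\Omega_1(Q\|P)=\sum_i\frac{p_i+q_i}{2}\ln\frac{p_i+q_i}{2q_i}$. *)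

(* Defs.v *)
From Stdlib Require Import Reals.
Open Scope R_scope.

Fixpoint sumn (n : nat) (f : nat -> R) : R :=
  match n with O => 0 | S m => sumn m f + f m end.

Definition Gamma (n : nat) (p : nat -> R) : Prop :=
  (forall i, (i < n)%nat -> 0 < p i) /\ sumn n p = 1.

Definition Phi (n : nat) (s : R) (p q : nat -> R) : R :=
  if Req_EM_T s 0 then sumn n (fun i => q i * ln (q i / p i))
  else if Req_EM_T s 1 then sumn n (fun i => p i * ln (p i / q i))
  else / (s * (s - 1)) *
       (sumn n (fun i => Rpower (p i) s * Rpower (q i) (1 - s)) - 1).

Definition Omega (n : nat) (s : R) (q p : nat -> R) : R :=
  if Req_EM_T s 0 then sumn n (fun i => q i * ln (2 * q i / (p i + q i)))
  else if Req_EM_T s 1 then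
    sumn n (fun i => (p i + q i) / 2 * ln ((p i + q i) / (2 * q i)))
  else / (s * (s - 1)) *
       (sumn n (fun i => q i * Rpower ((p i + q i) / (2 * q i)) s) - 1).

(* Main.v *)
Require Import Defs.
From Coquelicot Require Import Coquelicot.
From Stdlib Require Import Reals Lra Lia.
Open Scope R_scope.

Lemma sumn_ext n f g : (forall i, (i < n)%nat -> f i = g i) -> sumn n f = sumn n g.
Proof. induction n; simpl; intros H; auto. rewrite IHn by (intros; apply H; lia). rewrite H by lia. auto. Qed.

Lemma sumn_lin n a b f g : sumn n (fun i => a * f i + b * g i) = a * sumn n f + b * sumn n g.
Proof. induction n; simpl. ring. rewrite IHn. ring. Qed.

Lemma sumn_le n f g : (forall i, (i < n)%nat -> f i <= g i) -> sumn n f <= sumn n g.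
Proof. induction n; simpl; intros H. lra. apply Rplus_le_compat. apply IHn; intros; apply H; lia. apply H; lia. Qed.

Lemma der_cont h h1 x : is_derive h x (h1 x) -> continuity_pt h x.
Proof. intros H. apply continuity_pt_filterlim. apply (ex_derive_continuous (K:=R_AbsRing) (V:=R_NormedModule) h x). eexists; eauto. Qed.

Section Conv.
Variables (h h1 h2 : R -> R) (r R0 : R).
Hypothesis hr : 0 < r.
Hypothesis D1 : forall z, 0 < z -> is_derive h z (h1 z).
Hypothesis D2 : forall z, 0 < z -> is_derive h1 z (h2 z).
Hypothesis P2 : forall z, r <= z <= R0 -> 0 <= h2 z.

Lemma mono1 a b : r <= a -> a <= b -> b <= R0 -> h1 a <= h1 b.
Proof.
  intros Ha Hab Hb.
  destruct (MVT_gen h1 a b h2) as [c [Hc E]].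
  - intros x Hx. apply D2. rewrite Rmin_left in Hx by lra. lra.
  - intros x Hx. apply (der_cont h1 h2). apply D2. rewrite Rmin_left in Hx by lra. lra.
  - rewrite Rmin_left in Hc by lra. rewrite Rmax_right in Hc by lra.
    assert (0 <= h2 c) by (apply P2; lra). nra.
Qed.

Lemma tangent x y : r <= x <= R0 -> r <= y <= R0 -> h x + h1 x * (y - x) <= h y.
Proof.
  intros Hx Hy.
  destruct (Rtotal_order x y) as [Hl|[He|Hg]].
  - destruct (MVT_gen h x y h1) as [c [Hc E]].
    + intros z Hz. apply D1. rewrite Rmin_left in Hz by lra. lra.
    + intros z Hz. apply (der_cont h h1). apply D1. rewrite Rmin_left in Hz by lra. lra.
    + rewrite Rmin_left in Hc by lra. rewrite Rmax_right in Hc by lra.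
      assert (h1 x <= h1 c) by (apply mono1; lra). nra.
  - subst. lra.
  - destruct (MVT_gen h x y h1) as [c [Hc E]].
    + intros z Hz. apply D1. rewrite Rmin_right in Hz by lra. lra.
    + intros z Hz. apply (der_cont h h1). apply D1. rewrite Rmin_right in Hz by lra. lra.
    + rewrite Rmin_right in Hc by lra. rewrite Rmax_left in Hc by lra.
      assert (h1 c <= h1 x) by (apply mono1; lra). nra.
Qed.

Lemma sum_conv n p q : Gamma n p -> Gamma n q ->
  (forall i, (i < n)%nat -> r <= p i / q i <= R0) ->
  h 1 <= sumn n (fun i => q i * h (p i / q i)).
Proof.
  intros [Pp Sp] [Pq Sq] B.
  assert (Eq : forall i, (i < n)%nat -> q i * (p i / q i) = p i).
  { intros i Hi. specialize (Pq i Hi). field. lra. }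
  assert (r <= 1).
  { assert (sumn n (fun i => r * q i + 0 * q i) <= sumn n (fun i => 1 * p i + 0 * q i)).
    { apply sumn_le. intros i Hi. rewrite <- (Eq i Hi). specialize (B i Hi). specialize (Pq i Hi).
      destruct B as [B1 B2]. generalize dependent (p i / q i). intros. nra. }
    rewrite !sumn_lin in H. rewrite Sp, Sq in H. lra. }
  assert (1 <= R0).
  { assert (sumn n (fun i => 1 * p i + 0 * q i) <= sumn n (fun i => R0 * q i + 0 * q i)).
    { apply sumn_le. intros i Hi. rewrite <- (Eq i Hi). specialize (B i Hi). specialize (Pq i Hi).
      destruct B as [B1 B2]. generalize dependent (p i / q i). intros. nra. }
    rewrite !sumn_lin, Sp, Sq in H0. lra. }
  assert (sumn n (fun i => (h 1 - h1 1) * q i + h1 1 * p i) <= sumn n (fun i => q i * h (p i / q i))).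
  { apply sumn_le. intros i Hi.
    pose proof (tangent 1 (p i / q i) ltac:(lra) (B i Hi)).
    pose proof (Eq i Hi) as EE. specialize (Pq i Hi).
    assert (q i * (h 1 + h1 1 * (p i / q i - 1)) <= q i * h (p i / q i)) by (apply Rmult_le_compat_l; lra).
    assert (q i * (h 1 + h1 1 * (p i / q i - 1)) = (h 1 - h1 1) * q i + h1 1 * (q i * (p i / q i))) by ring.
    assert (h1 1 * p i = h1 1 * (q i * (p i / q i))) by (rewrite EE; ring).
    lra. }
  rewrite sumn_lin in H1. rewrite Sp, Sq in H1. lra.
Qed.
End Conv.

Lemma is_derive_fix (f : R -> R) (x l l' : R) : is_derive f x l -> l = l' -> is_derive f x l'.
Proof. intros H ->; exact H. Qed.

Section Cmp.
Variables (f f1 f2 g g1 g2 : R -> R) (r R0 m : R) (n : nat) (p q : nat -> R).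
Hypothesis hr : 0 < r.
Hypothesis Df1 : forall z, 0 < z -> is_derive f z (f1 z).
Hypothesis Df2 : forall z, 0 < z -> is_derive f1 z (f2 z).
Hypothesis Dg1 : forall z, 0 < z -> is_derive g z (g1 z).
Hypothesis Dg2 : forall z, 0 < z -> is_derive g1 z (g2 z).
Hypothesis f0 : f 1 = 0.
Hypothesis g0 : g 1 = 0.
Hypothesis Gp : Gamma n p.
Hypothesis Gq : Gamma n q.
Hypothesis B : forall i, (i < n)%nat -> r <= p i / q i <= R0.

Lemma cmp_low : (forall u, r <= u <= R0 -> m * f2 u <= g2 u) ->
  m * sumn n (fun i => q i * f (p i / q i)) <= sumn n (fun i => q i * g (p i / q i)).
Proof.
  intros H.
  pose proof (sum_conv (fun u => g u - m * f u) (fun u => g1 u - m * f1 u)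
     (fun u => g2 u - m * f2 u) r R0 hr) as S.
  assert (K: 0 <= sumn n (fun i => 1 * (q i * g (p i / q i)) + (- m) * (q i * f (p i / q i)))).
  { rewrite <- (sumn_ext n (fun i => q i * (g (p i / q i) - m * f (p i / q i)))).
    replace 0 with (g 1 - m * f 1) by (rewrite f0, g0; ring).
    apply S; auto.
    - intros z Hz. apply (is_derive_minus (fun u => g u) (fun u => m * f u)); auto.
      apply is_derive_scal; auto.
    - intros z Hz. apply (is_derive_minus (fun u => g1 u) (fun u => m * f1 u)); auto.
      apply is_derive_scal; auto.
    - intros z Hz. specialize (H z Hz). lra.
    - intros; ring. }
  rewrite sumn_lin in K. lra.
Qed.

Lemma cmp_up : (forall u, r <= u <= R0 -> g2 u <= m * f2 u) ->
  sumn n (fun i => q i * g (p i / q i)) <= m * sumn n (fun i => q i * f (p i / q i)).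
Proof.
  intros H.
  pose proof (sum_conv (fun u => m * f u - g u) (fun u => m * f1 u - g1 u)
     (fun u => m * f2 u - g2 u) r R0 hr) as S.
  assert (K: 0 <= sumn n (fun i => (-1) * (q i * g (p i / q i)) + m * (q i * f (p i / q i)))).
  { rewrite <- (sumn_ext n (fun i => q i * (m * f (p i / q i) - g (p i / q i)))).
    replace 0 with (m * f 1 - g 1) by (rewrite f0, g0; ring).
    apply S; auto.
    - intros z Hz. apply (is_derive_minus (fun u => m * f u) (fun u => g u)); auto.
      apply is_derive_scal; auto.
    - intros z Hz. apply (is_derive_minus (fun u => m * f1 u) (fun u => g1 u)); auto.
      apply is_derive_scal; auto.
    - intros z Hz. specialize (H z Hz). lra.
    - intros; ring. }
  rewrite sumn_lin in K. lra.
Qed.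
End Cmp.
Definition phi (s t x : R) := (s-2) * ln ((x+1)/2) + (2-t) * ln x.

Lemma mono_a x y : 0 < x -> x <= y -> ln ((x+1)/2) <= ln ((y+1)/2).
Proof. intros. apply ln_le; lra. Qed.

Lemma mono_b x y : 0 < x -> x <= y -> ln x - ln ((x+1)/2) <= ln y - ln ((y+1)/2).
Proof.
  intros. rewrite <- !ln_div by lra. apply ln_le.
  - apply Rdiv_lt_0_compat; lra.
  - assert (E: y / ((y+1)/2) - x / ((x+1)/2) = 2 * (y - x) * / ((x+1)*(y+1))) by (field; lra).
    assert (0 <= 2 * (y - x) * / ((x+1)*(y+1))).
    { apply Rmult_le_pos. lra. apply Rlt_le, Rinv_0_lt_compat. nra. }
    lra.
Qed.

Lemma phi_inc s t x y : s >= t -> t <= 2 -> 0 < x -> x <= y -> phi s t x <= phi s t y.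
Proof.
  intros. unfold phi. pose proof (mono_a x y H1 H2). pose proof (mono_b x y H1 H2).
  assert (0 <= (s-t) * (ln ((y+1)/2) - ln ((x+1)/2))) by (apply Rmult_le_pos; lra).
  assert (0 <= (2-t) * ((ln y - ln ((y+1)/2)) - (ln x - ln ((x+1)/2)))) by (apply Rmult_le_pos; lra).
  nra.
Qed.

Lemma phi_dec s t x y : s <= t -> t >= 2 -> 0 < x -> x <= y -> phi s t y <= phi s t x.
Proof.
  intros. unfold phi. pose proof (mono_a x y H1 H2). pose proof (mono_b x y H1 H2).
  assert (0 <= (t-s) * (ln ((y+1)/2) - ln ((x+1)/2))) by (apply Rmult_le_pos; lra).
  assert (0 <= (t-2) * ((ln y - ln ((y+1)/2)) - (ln x - ln ((x+1)/2)))) by (apply Rmult_le_pos; lra).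
  nra.
Qed.

Lemma exp_le' a b : a <= b -> exp a <= exp b.
Proof. intros [H|H]. left; apply exp_increasing; auto. subst; lra. Qed.

Lemma kcmp_low s t x u : 0 < x -> 0 < u -> phi s t x <= phi s t u ->
  / (4 * Rpower x (t - 2)) * Rpower ((x + 1) / 2) (s - 2) * Rpower u (t - 2)
  <= / 4 * Rpower ((u + 1) / 2) (s - 2).
Proof.
  intros Hx Hu H. unfold Rpower, phi in *.
  rewrite Rinv_mult, <- exp_Ropp.
  rewrite !Rmult_assoc. apply Rmult_le_compat_l. lra.
  rewrite <- !exp_plus. apply exp_le'. nra.
Qed.

Lemma kcmp_up s t x u : 0 < x -> 0 < u -> phi s t u <= phi s t x ->
  / 4 * Rpower ((u + 1) / 2) (s - 2) <=
  / (4 * Rpower x (t - 2)) * Rpower ((x + 1) / 2) (s - 2) * Rpower u (t - 2).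
Proof.
  intros Hx Hu H. unfold Rpower, phi in *.
  rewrite Rinv_mult, <- exp_Ropp.
  rewrite !Rmult_assoc. apply Rmult_le_compat_l. lra.
  rewrite <- !exp_plus. apply exp_le'. nra.
Qed.
Lemma D_pow a u : 0 < u -> is_derive (fun x => Rpower x a) u (a * Rpower u (a - 1)).
Proof. intros. apply is_derive_Reals. apply derivable_pt_lim_power. auto. Qed.

Lemma D_powh a u : 0 < u ->
  is_derive (fun x => Rpower ((x + 1) / 2) a) u (/ 2 * (a * Rpower ((u + 1) / 2) (a - 1))).
Proof.
  intros. apply (is_derive_comp (fun y => Rpower y a) (fun x => (x + 1) / 2)).
  - apply D_pow. lra.
  - apply is_derive_fix with (1 * / 2 + 0 * / 2 * ((u+1) * / 2)). auto_derive. auto. ring. ring.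
Qed.

Lemma Rpower_base1 a : Rpower 1 a = 1.
Proof. unfold Rpower. rewrite ln_1, Rmult_0_r, exp_0. auto. Qed.

Lemma Rpower_m1 u : 0 < u -> Rpower u (-1) = / u.
Proof. intros. replace (-1) with (- (1)) by ring. rewrite Rpower_Ropp, Rpower_1; auto. Qed.

Lemma Rpower_m2 u : 0 < u -> Rpower u (-2) = / (u * u).
Proof. intros. replace (-2) with (- (2)) by ring. rewrite Rpower_Ropp. replace 2 with (INR 2) by (simpl; ring).
  rewrite Rpower_pow by auto. simpl. f_equal; ring. Qed.

Lemma Rq t p q : 0 < p -> 0 < q -> q * Rpower (p / q) t = Rpower p t * Rpower q (1 - t).
Proof.
  intros. unfold Rpower. rewrite ln_div by auto.
  rewrite <- (exp_ln q) at 1 by auto. rewrite <- !exp_plus. f_equal. ring.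
Qed.

Lemma f_inst n t p q : Gamma n p -> Gamma n q ->
  exists f f1 : R -> R,
    (forall z, 0 < z -> is_derive f z (f1 z)) /\
    (forall z, 0 < z -> is_derive f1 z (Rpower z (t - 2))) /\
    f 1 = 0 /\ Phi n t p q = sumn n (fun i => q i * f (p i / q i)).
Proof.
  intros [Pp Sp] [Pq Sq]. unfold Phi.
  destruct (Req_EM_T t 0) as [H0|H0].
  { subst t. exists (fun u => - ln u), (fun u => - / u). split; [|split; [|split]].
    - intros z Hz. apply is_derive_fix with (- (/ z)). auto_derive. lra. ring. ring.
    - intros z Hz. apply is_derive_fix with (/ (z * z)). auto_derive. lra. field. lra.
      replace (0 - 2) with (-2) by ring. rewrite Rpower_m2; auto.
    - rewrite ln_1. ring.
    - apply sumn_ext. intros i Hi. specialize (Pp i Hi). specialize (Pq i Hi).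
      rewrite !ln_div by auto. ring. }
  destruct (Req_EM_T t 1) as [H1|H1].
  { subst t. exists (fun u => u * ln u), (fun u => ln u + 1). split; [|split; [|split]].
    - intros z Hz. apply is_derive_fix with (ln z + 1). auto_derive. lra. field. lra. auto.
    - intros z Hz. apply is_derive_fix with (/ z). auto_derive. lra. ring.
      replace (1 - 2) with (-1) by ring. rewrite Rpower_m1; auto.
    - rewrite ln_1. ring.
    - apply sumn_ext. intros i Hi. specialize (Pp i Hi). specialize (Pq i Hi).
      field. lra. }
  exists (fun u => / (t * (t - 1)) * (Rpower u t - 1)), (fun u => / (t - 1) * Rpower u (t - 1)).
  split; [|split; [|split]].
  - intros z Hz. apply is_derive_fix with (/ (t * (t - 1)) * (t * Rpower z (t - 1) - 0)).
    apply is_derive_scal. apply (is_derive_minus (fun x => Rpower x t) (fun _ => 1)).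
    apply D_pow; auto. auto_derive; auto.
    field. split; intro; apply H1 || apply H0; lra.
  - intros z Hz. apply is_derive_fix with (/ (t - 1) * ((t - 1) * Rpower z (t - 1 - 1))).
    apply is_derive_scal. apply D_pow; auto.
    replace (t - 1 - 1) with (t - 2) by ring. field. intro; apply H1; lra.
  - rewrite Rpower_base1. ring.
  - rewrite (sumn_ext n (fun i => q i * (/ (t * (t - 1)) * (Rpower (p i / q i) t - 1))) (fun i => / (t * (t - 1)) * (Rpower (p i) t * Rpower (q i) (1 - t)) + (- / (t * (t - 1))) * q i)).
    + rewrite sumn_lin, Sq. ring.
    + intros i Hi. specialize (Pp i Hi). specialize (Pq i Hi).
      rewrite <- Rq by auto. ring.
Qed.
Lemma argeq p q : 0 < q -> (p + q) / (2 * q) = (p / q + 1) / 2.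
Proof. intros. field. lra. Qed.

Lemma g_inst n s p q : Gamma n p -> Gamma n q ->
  exists g g1 : R -> R,
    (forall z, 0 < z -> is_derive g z (g1 z)) /\
    (forall z, 0 < z -> is_derive g1 z (/ 4 * Rpower ((z + 1) / 2) (s - 2))) /\
    g 1 = 0 /\ Omega n s q p = sumn n (fun i => q i * g (p i / q i)).
Proof.
  intros [Pp Sp] [Pq Sq]. unfold Omega.
  destruct (Req_EM_T s 0) as [H0|H0].
  { subst s. exists (fun u => - ln ((u + 1) / 2)), (fun u => - / (u + 1)).
    split; [|split; [|split]].
    - intros z Hz. apply is_derive_fix with (- / (z + 1)). auto_derive. lra. field. lra. auto.
    - intros z Hz. apply is_derive_fix with (/ ((z + 1) * (z + 1))). auto_derive. lra. field. lra.
      replace (0 - 2) with (-2) by ring. rewrite Rpower_m2 by lra. field. lra.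
    - replace ((1 + 1) / 2) with 1 by field. rewrite ln_1. ring.
    - apply sumn_ext. intros i Hi. specialize (Pp i Hi). specialize (Pq i Hi).
      rewrite <- argeq by auto. rewrite !ln_div by lra. ring. }
  destruct (Req_EM_T s 1) as [H1|H1].
  { subst s. exists (fun u => (u + 1) / 2 * ln ((u + 1) / 2)), (fun u => / 2 * ln ((u + 1) / 2) + / 2).
    split; [|split; [|split]].
    - intros z Hz. apply is_derive_fix with (/ 2 * ln ((z + 1) / 2) + / 2). auto_derive. lra. unfold Rdiv; field; lra. auto.
    - intros z Hz. apply is_derive_fix with (/ (2 * (z + 1))). auto_derive. lra. field. lra.
      replace (1 - 2) with (-1) by ring. rewrite Rpower_m1 by lra. field. lra.
    - replace ((1 + 1) / 2) with 1 by field. rewrite ln_1. ring.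
    - apply sumn_ext. intros i Hi. specialize (Pp i Hi). specialize (Pq i Hi).
      rewrite <- argeq by auto. field. lra. }
  exists (fun u => / (s * (s - 1)) * (Rpower ((u + 1) / 2) s - 1)),
         (fun u => / (2 * (s - 1)) * Rpower ((u + 1) / 2) (s - 1)).
  split; [|split; [|split]].
  - intros z Hz. apply is_derive_fix with (/ (s * (s - 1)) * (/ 2 * (s * Rpower ((z + 1) / 2) (s - 1)) - 0)).
    apply is_derive_scal. apply (is_derive_minus (fun x => Rpower ((x + 1) / 2) s) (fun _ => 1)).
    apply D_powh; auto. auto_derive; auto.
    field. split; intro; apply H1 || apply H0; lra.
  - intros z Hz. apply is_derive_fix with (/ (2 * (s - 1)) * (/ 2 * ((s - 1) * Rpower ((z + 1) / 2) (s - 1 - 1)))).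
    apply is_derive_scal. apply D_powh; auto.
    replace (s - 1 - 1) with (s - 2) by ring. field. intro; apply H1; lra.
  - replace ((1 + 1) / 2) with 1 by field. rewrite Rpower_base1. ring.
  - rewrite (sumn_ext n (fun i => q i * (/ (s * (s - 1)) * (Rpower ((p i / q i + 1) / 2) s - 1)))
      (fun i => / (s * (s - 1)) * (q i * Rpower ((p i + q i) / (2 * q i)) s) + (- / (s * (s - 1))) * q i)).
    + rewrite sumn_lin, Sq. ring.
    + intros i Hi. specialize (Pp i Hi). specialize (Pq i Hi).
      rewrite argeq by auto. ring.
Qed.
Theorem theorem4p1 (n : nat) (p q : nat -> R) (r R0 s t : R) :
  (2 <= n)%nat -> Gamma n p -> Gamma n q ->
  0 < r -> r <= R0 ->
  (forall i, (i < n)%nat -> r <= p i / q i <= R0) ->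
  ((s >= t /\ t <= 2) ->
     / (4 * Rpower r (t - 2)) * Rpower ((r + 1) / 2) (s - 2) * Phi n t p q
       <= Omega n s q p
     /\ Omega n s q p
       <= / (4 * Rpower R0 (t - 2)) * Rpower ((R0 + 1) / 2) (s - 2) * Phi n t p q)
  /\
  ((s <= t /\ t >= 2) ->
     / (4 * Rpower R0 (t - 2)) * Rpower ((R0 + 1) / 2) (s - 2) * Phi n t p q
       <= Omega n s q p
     /\ Omega n s q p
       <= / (4 * Rpower r (t - 2)) * Rpower ((r + 1) / 2) (s - 2) * Phi n t p q).
Proof.
  intros Hn Gp Gq Hr HrR B.
  destruct (f_inst n t p q Gp Gq) as (f & f1 & Df & Df1 & f0 & EP).
  destruct (g_inst n s p q Gp Gq) as (g & g1 & Dg & Dg1 & g0 & EO).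
  rewrite EP, EO.
  split; intros [Hst Ht]; split.
  - apply (cmp_low f f1 (fun z => Rpower z (t - 2)) g g1 (fun z => / 4 * Rpower ((z + 1) / 2) (s - 2)) r R0);
      auto.
    intros u Hu. apply kcmp_low; try lra. apply phi_inc; lra.
  - apply (cmp_up f f1 (fun z => Rpower z (t - 2)) g g1 (fun z => / 4 * Rpower ((z + 1) / 2) (s - 2)) r R0);
      auto.
    intros u Hu. apply kcmp_up; try lra. apply phi_inc; lra.
  - apply (cmp_low f f1 (fun z => Rpower z (t - 2)) g g1 (fun z => / 4 * Rpower ((z + 1) / 2) (s - 2)) r R0);
      auto.
    intros u Hu. apply kcmp_low; try lra. apply phi_dec; lra.
  - apply (cmp_up f f1 (fun z => Rpower z (t - 2)) g g1 (fun z => / 4 * Rpower ((z + 1) / 2) (s - 2)) r R0);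
      auto.
    intros u Hu. apply kcmp_up; try lra. apply phi_dec; lra.
Qed.
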